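(* Let $R$ be a commutative noetherian local ring and let $M$ be a right bounded $R$-complex with $\operatorname{depth}_R M_i\ge \operatorname{depth}R$ for all $i$. If $\operatorname{depth}_R \mathrm{H}_i(M)\ge \operatorname{depth}R-1$ for all $i$, then $\operatorname{depth}_R \mathrm{Z}_i(M)\ge\operatorname{depth}R$ and $\operatorname{depth}_R\mathrm{B}_i(M)\ge\operatorname{depth}R$ for all $i$.
   Context: For an $R$-complex $M$ with differential $\partial$: $\mathrm{Z}_i(M)=\ker\partial_i$, $\mathrm{B}_i(M)=\operatorname{im}\partial_{i+1}$, $\mathrm{H}_i(M)=\mathrm{Z}_i(M)/\mathrm{B}_i(M)$. By convention the depth of the zero module is $+\infty$. *)

(* Defs.v *)
From HB Require Import structures.
From mathcomp Require Import all_boot all_order all_algebra.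
Set Implicit Arguments. Unset Strict Implicit. Unset Printing Implicit Defensive.
Import Order.TTheory GRing.Theory Num.Theory.
Local Open Scope ring_scope.

Section CommAlg.
Variable R : comUnitRingType.

Definition is_ideal (I : {pred R}) : Prop :=
  0 \in I /\ (forall a b, a \in I -> b \in I -> a + b \in I) /\
  (forall r a, a \in I -> r * a \in I).

Definition noetherian : Prop :=
  forall I : {pred R}, is_ideal I ->
    exists (n : nat) (g : 'I_n -> R),
      forall r, r \in I <-> exists c : 'I_n -> R, r = \sum_(k < n) c k * g k.

Definition local_ring : Prop :=
  is_ideal [pred r : R | r \isn't a GRing.unit].

Definition generates_max (n : nat) (x : 'I_n -> R) : Prop :=
  forall r : R, r \isn't a GRing.unit <->
    exists c : 'I_n -> R, r = \sum_(k < n) c k * x k.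

(** Koszul complex K(x; V): a chain is a function f : {set 'I_n} -> V,
    f S being the coefficient of e_S; degree-i chains are supported on
    sets of size i. Differential:
    e_S |-> sum_{j in S} (-1)^{#{k in S | k < j}} x_j e_{S \ j}. *)
Definition kdiff (V : lmodType R) (n : nat) (x : 'I_n -> R)
    (f : {set 'I_n} -> V) (T : {set 'I_n}) : V :=
  \sum_(j < n | j \notin T)
     (((-1) ^+ #|[set k in T | (k < j)%N]| * x j) *: f (j |: T)).

(** H_i(x; A/B) = 0, where B <= A <= V are submodules, i.e. the i-th
    Koszul homology of the subquotient module A/B vanishes. *)
Definition koszul_vanish (V : lmodType R) (n : nat) (x : 'I_n -> R)
    (A B : V -> Prop) (i : nat) : Prop :=
  forall f : {set 'I_n} -> V,
    (forall S : {set 'I_n}, A (f S)) -> (forall S : {set 'I_n}, #|S| != i -> f S = 0) ->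
    (forall T : {set 'I_n}, B (kdiff x f T)) ->
    exists g : {set 'I_n} -> V,
      (forall S : {set 'I_n}, A (g S)) /\ (forall S : {set 'I_n}, #|S| != i.+1 -> g S = 0) /\
      (forall S : {set 'I_n}, B (f S - kdiff x g S)).

(** depth_R (A/B) >= d, with depth defined through Koszul homology on a
    generating sequence x_1..x_n of m:
      depth N = n - sup { i | H_i(x; N) <> 0 }   (= +oo if all vanish). *)
Definition depth_ge (V : lmodType R) (n : nat) (x : 'I_n -> R)
    (A B : V -> Prop) (d : int) : Prop :=
  forall i : nat, (n%:Z - d < i%:Z) -> koszul_vanish x A B i.

Definition mod_depth_ge (V : lmodType R) (n : nat) (x : 'I_n -> R) (d : int) :=
  depth_ge x (fun _ : V => True) (fun v : V => v = 0) d.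

Definition ring_depth_eq (n : nat) (x : 'I_n -> R) (d : nat) : Prop :=
  @mod_depth_ge R^o n x d%:Z /\ ~ @mod_depth_ge R^o n x d.+1%:Z.

Definition castM (M : int -> lmodType R) (i j : int) (e : i = j) (m : M i) : M j :=
  ecast k (M k) e m.

Definition is_complex (M : int -> lmodType R)
    (d : forall i : int, {linear M i -> M (i - 1)}) : Prop :=
  forall (i : int) (m : M i), d (i - 1) (d i m) = 0.

Definition right_bounded (M : int -> lmodType R) : Prop :=
  exists n0 : int, forall i : int, i < n0 -> forall m : M i, m = 0.

Definition cycles (M : int -> lmodType R)
    (d : forall i : int, {linear M i -> M (i - 1)}) (i : int) : M i -> Prop :=
  fun m => d i m = 0.

Definition boundaries (M : int -> lmodType R)
    (d : forall i : int, {linear M i -> M (i - 1)}) (i : int) : M i -> Prop :=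
  fun m => exists y : M (i + 1), castM (addrK 1 i) (d (i + 1) y) = m.

End CommAlg.

Arguments cycles {R M} d i _.
Arguments boundaries {R M} d i _.

(* Main.v *)
Require Import Defs.
From HB Require Import structures.
From mathcomp Require Import all_boot all_order all_algebra.
From mathcomp Require Import zify ring.
From Stdlib Require Import ClassicalEpsilon.
Import Order.TTheory GRing.Theory Num.Theory.
Local Open Scope ring_scope.

Set Implicit Arguments. Unset Strict Implicit.

Section K.
Variables (R : comUnitRingType) (n : nat) (x : 'I_n -> R).

Lemma kdiff_ext (V : lmodType R) (f g : {set 'I_n} -> V) :
  (forall S : {set 'I_n}, f S = g S) -> forall T : {set 'I_n}, kdiff x f T = kdiff x g T.
Proof. move=> H T; rewrite /kdiff; apply: eq_bigr => j _; by rewrite H. Qed.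

Lemma kdiffB (V : lmodType R) (f g : {set 'I_n} -> V) T :
  kdiff x (fun S => f S - g S) T = kdiff x f T - kdiff x g T.
Proof. rewrite /kdiff -sumrB; apply: eq_bigr => j _; by rewrite scalerBr. Qed.

Lemma kdiff_lin (U V : lmodType R) (L : {linear U -> V}) (f : {set 'I_n} -> U) (T : {set 'I_n}) :
  L (kdiff x f T) = kdiff x (fun S => L (f S)) T.
Proof. rewrite /kdiff raddf_sum; apply: eq_bigr => j _; exact: linearZ. Qed.

Lemma kdiff_deg (V : lmodType R) (f : {set 'I_n} -> V) k :
  (forall S : {set 'I_n}, #|S| != k.+1 -> f S = 0) -> forall T : {set 'I_n}, #|T| != k -> kdiff x f T = 0.
Proof.
move=> Hf T HT; rewrite /kdiff big1 // => j Hj; rewrite Hf ?scaler0 //.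
by rewrite cardsU1 Hj add1n eqSS.
Qed.

Definition sg (T : {set 'I_n}) (j : 'I_n) : R :=
  (-1) ^+ #|[set k in T | (k < j)%N]| * x j.

Lemma card_lt (j l : 'I_n) (T : {set 'I_n}) : j \notin T ->
  #|[set k in j |: T | (k < l)%N]| = ((j < l)%N + #|[set k in T | (k < l)%N]|)%N.
Proof.
move=> Hj.
have -> : [set k in j |: T | (k < l)%N] =
   if (j < l)%N then j |: [set k in T | (k < l)%N] else [set k in T | (k < l)%N].
  apply/setP => k; case: ifP => Hjl; rewrite !inE;
    case: (eqVneq k j) => [->|] /=; rewrite ?Hjl ?andbF //.
case: ifP => Hjl //.
by rewrite cardsU1 inE (negbTE Hj).
Qed.

Lemma sg_anti (j l : 'I_n) (T : {set 'I_n}) : j \notin T -> l \notin T -> j != l ->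
  sg T j * sg (j |: T) l = - (sg T l * sg (l |: T) j).
Proof.
move=> Hj Hl Hjl; rewrite /sg !card_lt //.
set a := #|[set k in T | (k < j)%N]|.
set b := #|[set k in T | (k < l)%N]|.
rewrite !exprD.
case: (ltngtP j l) => H.
- rewrite expr1 expr0; ring.
- rewrite expr1 expr0; ring.
- by move: Hjl; rewrite (val_inj H) eqxx.
Qed.

Lemma antisym_sum (V : zmodType) m (G : 'I_m -> 'I_m -> V) :
  (forall j, G j j = 0) -> (forall j l, G l j = - G j l) ->
  \sum_j \sum_l G j l = 0.
Proof.
move=> H0 HA.
have E : forall j l, G j l =
   (if (l < j)%N then G j l else 0) + (if (j < l)%N then G j l else 0).
  move=> j l; case: (ltngtP l j) => H; rewrite ?addr0 ?add0r //.
  by rewrite (val_inj H) H0 ?addr0.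
under eq_bigr => j _ do under eq_bigr => l _ do rewrite E.
under eq_bigr => j _ do rewrite big_split.
rewrite big_split /= [X in X + _]exchange_big /= -big_split.
apply: big1 => a _; rewrite -big_split; apply: big1 => b _ /=.
rewrite (HA a b); case: ifP => _; by rewrite ?addNr ?addr0.
Qed.

Lemma kdiff2 (V : lmodType R) (f : {set 'I_n} -> V) (T : {set 'I_n}) :
  kdiff x (kdiff x f) T = 0.
Proof.
pose G j l := if (j \notin T) && (l \notin T) && (j != l) then
   (sg T j * sg (j |: T) l) *: f (l |: (j |: T)) else 0.
transitivity (\sum_j \sum_l G j l).
  rewrite /kdiff big_mkcond; apply: eq_bigr => j _ /=; rewrite /G.
  case: ifP => Hj /=.
    rewrite scaler_sumr big_mkcond; apply: eq_bigr => l _ /=.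
    rewrite in_setU1 negb_or eq_sym.
    by case: (l \notin T); case: (j != l) => //=; rewrite scalerA.
  by rewrite big1.
apply: antisym_sum => [j|j l]; first by rewrite /G eqxx andbF.
rewrite /G; case Hj: (j \notin T); case Hl: (l \notin T); case: (eqVneq j l) => [->|Hjl];
  rewrite /= ?oppr0 ?eqxx ?andbF //.
rewrite (sg_anti Hl Hj) 1?eq_sym // scaleNr.
by rewrite setUCA.
Qed.

Lemma sub_vanish (U V : lmodType R) (L : {linear U -> V}) (Q : V -> Prop) (k : nat) :
  (forall u, Q (L u)) -> (forall v, Q v -> exists u, L u = v) ->
  koszul_vanish x (fun _ : U => True) (fun u => u = 0) k ->
  koszul_vanish x Q (fun v => v = 0) k.+1 ->
  koszul_vanish x (fun u => L u = 0) (fun u => u = 0) k.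
Proof.
move=> HQ Hs HU HV f Af Df Cf.
have [g [_ [Dg Eg]]] := HU f (fun _ => I) Df Cf.
have Efg : forall T : {set 'I_n}, f T = kdiff x g T by move=> T; apply: subr0_eq; exact: Eg.
have [h [Ah [Dh Eh]]] : exists h : {set 'I_n} -> V,
    (forall S : {set 'I_n}, Q (h S)) /\ (forall S : {set 'I_n}, #|S| != k.+2 -> h S = 0) /\
    (forall S : {set 'I_n}, L (g S) - kdiff x h S = 0).
  apply: (HV (fun S => L (g S))) => [S|S HS|T]; first exact: HQ.
    by rewrite Dg // linear0.
  by rewrite -kdiff_lin -Efg Af.
pose s v := epsilon (inhabits (0 : U)) (fun u => L u = v).
have Hsv : forall v, Q v -> L (s v) = v.
  move=> v Qv; rewrite /s; apply: (epsilon_spec (inhabits (0:U)) (fun u => L u = v)).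
  exact: Hs.
pose h' (S : {set 'I_n}) := if #|S| == k.+2 then s (h S) else 0.
have Lh' : forall S : {set 'I_n}, L (h' S) = h S.
  move=> S; rewrite /h'; case: eqP => HS; first exact: Hsv.
  by rewrite linear0 Dh //; apply/eqP.
have Dh' : forall S : {set 'I_n}, #|S| != k.+2 -> h' S = 0.
  by move=> S HS; rewrite /h' (negbTE HS).
exists (fun S => g S - kdiff x h' S); split; last split.
- move=> S; rewrite linearB kdiff_lin (kdiff_ext (g := h)) //; exact: Eh.
- by move=> S HS; rewrite Dg // (kdiff_deg Dh') ?subr0.
- by move=> S; rewrite kdiffB kdiff2 subr0 Eg.
Qed.

Lemma quot_vanish (V : lmodType R) (B Z : V -> Prop) (k : nat) :
  (forall v, B v -> Z v) ->
  koszul_vanish x Z (fun v => v = 0) k ->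
  koszul_vanish x Z B k.+1 ->
  koszul_vanish x B (fun v => v = 0) k.
Proof.
move=> BZ HZ HH f Bf Df Cf.
have [g [Zg [Dg Eg]]] := HZ f (fun S => BZ _ (Bf S)) Df Cf.
have Efg : forall T : {set 'I_n}, f T = kdiff x g T by move=> T; apply: subr0_eq; exact: Eg.
have [h [Zh [Dh Eh]]] := HH g Zg Dg (fun T => eq_ind _ B (Bf T) _ (Efg T)).
exists (fun S => g S - kdiff x h S); split; last split.
- exact: Eh.
- by move=> S HS; rewrite Dg // (kdiff_deg Dh) ?subr0.
- by move=> S; rewrite kdiffB kdiff2 subr0 Eg.
Qed.

End K.

Theorem lemma3p8 (R : comUnitRingType)
    (HnoethR : noetherian R) (HlocR : local_ring R)
    (n : nat) (x : 'I_n -> R) (Hx : generates_max x)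
    (dR : nat) (HdR : ring_depth_eq x dR)
    (M : int -> lmodType R) (d : forall i : int, {linear M i -> M (i - 1)})
    (Hcx : is_complex d) (Hrb : right_bounded M)
    (HMi : forall i : int, @mod_depth_ge R (M i) n x dR%:Z)
    (HH : forall i : int,
        depth_ge x (cycles d i) (boundaries d i) (dR%:Z - 1)) :
  forall i : int,
    depth_ge x (cycles d i) (fun m : M i => m = 0) dR%:Z /\
    depth_ge x (boundaries d i) (fun m : M i => m = 0) dR%:Z.
Proof.
have castK : forall (a b : int) (e1 : a = b) (e2 : b = a) (m : M a),
    @castM R M b a e2 (@castM R M a b e1 m) = m.
  move=> a b e1; case: b / e1 => e2 m; by rewrite (eq_irrelevance e2 erefl).
have cast0 : forall (a b : int) (e : a = b), @castM R M a b e 0 = 0.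
  by move=> a b e; case: b / e.
have dcast : forall (j i : int) (e : j = i) (e' : j - 1 = i - 1) (y : M j),
    @castM R M _ _ e' (d j y) = d i (@castM R M _ _ e y).
  move=> j i e; case: i / e => e' y; by rewrite (eq_irrelevance e' erefl).
have BZ : forall i m, boundaries d i m -> cycles d i m.
  move=> i m [y <-]; rewrite /cycles.
  have E' : i + 1 - 1 - 1 = i - 1 by rewrite addrK.
  by rewrite -(dcast _ _ (addrK 1 i) E') Hcx cast0.
have QL : forall i u, boundaries d (i - 1) (d i u).
  move=> i u.
  have E0 : i = i - 1 + 1 by rewrite subrK.
  have E1 : i - 1 = i - 1 + 1 - 1 by rewrite subrK.
  exists (@castM R M _ _ E0 u).
  by rewrite -(dcast _ _ E0 E1) castK.
have Surj : forall i v, boundaries d (i - 1) v -> exists u, d i u = v.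
  move=> i v [y <-].
  have E2 : i - 1 + 1 = i by rewrite subrK.
  exists (@castM R M _ _ E2 y).
  by rewrite -(dcast _ _ E2 (addrK 1 (i - 1))).
have [n0 Hz] := Hrb.
have base : forall i, i < n0 -> depth_ge x (boundaries d i) (fun m : M i => m = 0) dR%:Z.
  move=> i Hi k _ f _ _ _; exists (fun _ => 0); split; last split.
  - by move=> S; exists 0; apply: Hz.
  - by [].
  - by move=> S; apply: Hz.
have Zof : forall i, depth_ge x (boundaries d (i - 1)) (fun m : M (i - 1) => m = 0) dR%:Z ->
    depth_ge x (cycles d i) (fun m : M i => m = 0) dR%:Z.
  move=> i HB k Hk.
  apply: (@sub_vanish R n x _ _ (d i) (boundaries d (i - 1))).
  - exact: QL.
  - exact: Surj.
  - exact: HMi.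
  - apply: HB; lia.
have Bof : forall i, depth_ge x (cycles d i) (fun m : M i => m = 0) dR%:Z ->
    depth_ge x (boundaries d i) (fun m : M i => m = 0) dR%:Z.
  move=> i HZ k Hk.
  apply: (@quot_vanish R n x _ _ _ _ (BZ i)); first exact: HZ.
  apply: HH; lia.
have Ind : forall m : nat, forall i, i < n0 + m%:Z ->
    depth_ge x (boundaries d i) (fun m : M i => m = 0) dR%:Z.
  elim=> [|m IH] i Hi; first by apply: base; rewrite addr0 in Hi.
  apply: Bof; apply: Zof; apply: IH; lia.
have Pi : forall i, depth_ge x (boundaries d i) (fun m : M i => m = 0) dR%:Z.
  move=> j; apply: (Ind `|j - n0|%N.+1); lia.
by move=> i; split; [apply: Zof | ]; apply: Pi.
Qed.
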